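(* Let $\omega\ge 3$, $m\ge 0$, $1\le k\le\lfloor(\omega-2)/2\rfloor$, and let $G$ be the group with presentation $$\langle \alpha,\beta\mid (\beta\alpha)^{k}\beta = \{(\beta\alpha)^k\beta^{\omega-2k}[(\beta\alpha)^k\beta\alpha^{-1}(\alpha\beta)^{-k}]^{-\omega+k}\}^m(\alpha\beta)^{k}\alpha\rangle.$$ For any homomorphism $\Phi:G\to\mathrm{Homeo}^+(\mathbb{R})$, if $\Phi(\alpha)(t)>t$ for all $t\in\mathbb{R}$, then $\Phi(\beta)(t)\ge t$ for all $t\in\mathbb{R}$.
   Context: $\mathrm{Homeo}^+(\mathbb{R})$ is the group of order-preserving homeomorphisms of $\mathbb{R}$. (This $G$ is the knot group of the closure of the braid $(\sigma_1\cdots\sigma_{2k})(\sigma_1\cdots\sigma_{\omega-1})^{1+m\omega}$.) *)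

(* Defs.v *)
From Stdlib Require Import Reals List ZArith Arith.
Open Scope R_scope.

Definition homeo_plus (f g : R -> R) : Prop :=
  (forall t, f (g t) = t) /\ (forall t, g (f t) = t) /\
  (forall s t, s < t -> f s < f t) /\
  continuity f /\ continuity g.

(** Words in the generators alpha, beta and their inverses. *)
Inductive letter := LA | LAi | LB | LBi.
Definition word := list letter.

Definition inv_letter (l : letter) : letter :=
  match l with LA => LAi | LAi => LA | LB => LBi | LBi => LB end.

Definition winv (w : word) : word := rev (map inv_letter w).

Fixpoint wpow (w : word) (n : nat) : word :=
  match n with O => nil | S n' => w ++ wpow w n' end.

Definition wzpow (w : word) (z : Z) : word :=
  if (0 <=? z)%Z then wpow w (Z.to_nat z) else wpow (winv w) (Z.to_nat (- z)).

(** Evaluation of a word under the homomorphism sending alpha |-> a, beta |-> b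
    (with inverses ai, bi); products are compositions: (x y)(t) = x (y t). *)
Fixpoint weval (a ai b bi : R -> R) (w : word) (t : R) : R :=
  match w with
  | nil => t
  | l :: w' =>
      let u := weval a ai b bi w' t in
      match l with LA => a u | LAi => ai u | LB => b u | LBi => bi u end
  end.

Definition ba : word := LB :: LA :: nil.
Definition ab : word := LA :: LB :: nil.

Definition rel_lhs (k : nat) : word := wpow ba k ++ LB :: nil.

Definition relC (k : nat) : word :=
  wpow ba k ++ (LB :: LAi :: nil) ++ wzpow ab (- Z.of_nat k).

Definition relW (omega k : nat) : word :=
  wpow ba k ++ wpow (LB :: nil) (omega - 2 * k) ++
  wzpow (relC k) (Z.of_nat k - Z.of_nat omega)%Z.

Definition rel_rhs (omega m k : nat) : word :=
  wpow (relW omega k) m ++ wpow ab k ++ LA :: nil.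

(* Main.v *)
Require Import Defs.
From Stdlib Require Import Reals List ZArith Arith.
From Stdlib Require Import Lra Lia.
Open Scope R_scope.

Definition mono (f : R -> R) := forall s t, s <= t -> f s <= f t.

Lemma strict_mono (f : R -> R) : (forall s t, s < t -> f s < f t) -> mono f.
Proof. intros H s t Hst. destruct (Rle_lt_or_eq_dec _ _ Hst) as [H1|H1].
  left; auto. subst; lra. Qed.

Lemma inv_mono (f g : R -> R) : (forall u, f (g u) = u) ->
  (forall s t, s < t -> f s < f t) -> mono g.
Proof. intros Hfg Hf s t Hst. destruct (Rle_or_lt (g s) (g t)) as [H|H]; auto.
  apply Hf in H. rewrite !Hfg in H. lra. Qed.

Lemma comp_mono (f g : R -> R) : mono f -> mono g -> mono (fun u => f (g u)).
Proof. intros Hf Hg s t H. apply Hf, Hg, H. Qed.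

Lemma iter_mono n (f : R -> R) : mono f -> mono (Nat.iter n f).
Proof. intros Hf; induction n; intros s t H; simpl; auto. Qed.

Lemma iter_inv n (f g : R -> R) : (forall u, f (g u) = u) ->
  forall t, Nat.iter n f (Nat.iter n g t) = t.
Proof. intros H; induction n; intros t; auto.
  rewrite Nat.iter_succ_r, Nat.iter_succ, H. apply IHn. Qed.

Lemma iter_comm k (f g p : R -> R) : (forall u, f (p u) = p (g u)) ->
  forall t, Nat.iter k f (p t) = p (Nat.iter k g t).
Proof. intros H; induction k; intros t; simpl; auto. rewrite IHk, H; auto. Qed.

Lemma iter_ge n (f : R -> R) : (forall t, t <= f t) -> forall t, t <= Nat.iter n f t.
Proof. intros H; induction n; intros t; simpl. lra. eapply Rle_trans; [apply IHn|apply H]. Qed.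

Lemma weval_app a ai b bi w1 w2 t :
  weval a ai b bi (w1 ++ w2) t = weval a ai b bi w1 (weval a ai b bi w2 t).
Proof. induction w1 as [|l w1 IH]; simpl; auto. rewrite IH; auto. Qed.

Lemma weval_wpow a ai b bi w n t :
  weval a ai b bi (wpow w n) t = Nat.iter n (weval a ai b bi w) t.
Proof. induction n; simpl; auto. rewrite weval_app, IHn; auto. Qed.

Lemma winv_cons l w : winv (l :: w) = winv w ++ (inv_letter l :: nil).
Proof. reflexivity. Qed.

Lemma weval_winv_r a ai b bi
  (h1 : forall t, a (ai t) = t) (h2 : forall t, ai (a t) = t)
  (h3 : forall t, b (bi t) = t) (h4 : forall t, bi (b t) = t) :
  forall w t, weval a ai b bi w (weval a ai b bi (winv w) t) = t.
Proof. induction w as [|l w IH]; intros t; simpl; auto.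
  rewrite winv_cons, weval_app, IH. destruct l; simpl; auto. Qed.

Theorem mainTheorem10 (omega m k : nat)
  (homega : (3 <= omega)%nat) (hk1 : (1 <= k)%nat) (hk2 : (k <= (omega - 2) / 2)%nat)
  (a ai b bi : R -> R) (ha : homeo_plus a ai) (hb : homeo_plus b bi)
  (hrel : forall t, weval a ai b bi (rel_lhs k) t = weval a ai b bi (rel_rhs omega m k) t) :
  (forall t, a t > t) -> forall t, b t >= t.
Proof. 
  intros Hapos.
  destruct ha as [ha1 [ha2 [ha3 _]]]. destruct hb as [hb1 [hb2 [hb3 _]]].
  assert (Hk2 : (2 * k <= omega - 2)%nat).
  { pose proof (Nat.Div0.mul_div_le (omega - 2) 2). lia. }
  assert (ma : mono a) by (apply strict_mono; auto).
  assert (mb : mono b) by (apply strict_mono; auto).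
  assert (mai : mono ai) by (eapply inv_mono; eauto).
  assert (mbi : mono bi) by (eapply inv_mono; eauto).
  set (x := Nat.iter k (fun u => a (b u))).
  set (xi := Nat.iter k (fun u => bi (ai u))).
  set (c := Nat.iter k (fun u => b (a u))).
  assert (mx : mono x) by (apply iter_mono, comp_mono; auto).
  assert (mxi : mono xi) by (apply iter_mono, comp_mono; auto).
  assert (mc : mono c) by (apply iter_mono, comp_mono; auto).
  assert (Hx : forall t, x (xi t) = t).
  { apply iter_inv. intros u. rewrite hb1, ha1; auto. }
  assert (Hxi : forall t, xi (x t) = t).
  { apply iter_inv. intros u. rewrite ha2, hb2; auto. }
  assert (Hcb : forall t, c (b t) = b (x t)).
  { apply iter_comm. auto. }
  assert (E2 : forall t, weval a ai b bi (wzpow ab (- Z.of_nat k)) t = xi t).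
  { intros t. destruct k as [|k']; [lia|]. unfold wzpow.
    destruct (0 <=? - Z.of_nat (S k'))%Z eqn:E.
    - apply Z.leb_le in E. lia.
    - rewrite Z.opp_involutive, Nat2Z.id, weval_wpow. reflexivity. }
  assert (EC : forall t, weval a ai b bi (relC k) t = c (b (ai (xi t)))).
  { intros t. unfold relC. rewrite !weval_app, weval_wpow, E2. reflexivity. }
  set (D := weval a ai b bi (winv (relC k))).
  assert (HD : forall t, D t = x (a (xi (bi t)))).
  { intros t. pose proof (weval_winv_r a ai b bi ha1 ha2 hb1 hb2 (relC k) t) as H.
    fold D in H. rewrite EC, Hcb in H. revert H. generalize (D t). intros y H.
    subst t. rewrite hb2, Hxi, ha1, Hx. reflexivity. }
  set (g := fun s => x (a (xi s))).
  assert (Hg : forall s, s <= g s).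
  { intros s. unfold g. rewrite <- (Hx s) at 1. apply mx.
    left; apply Hapos. }
  assert (mg : mono g) by (unfold g; intros s0 t0 H0; apply mx, ma, mxi, H0).
  assert (mD : mono D).
  { intros s t H. rewrite !HD. apply mg, mbi, H. }
  set (n := (omega - 2 * k)%nat).
  set (W := weval a ai b bi (relW omega k)).
  assert (EW : forall t, W t = c (Nat.iter n b (Nat.iter (n + k) D t))).
  { intros t. unfold W, relW. rewrite !weval_app, !weval_wpow. unfold wzpow.
    destruct (0 <=? Z.of_nat k - Z.of_nat omega)%Z eqn:E.
    - apply Z.leb_le in E. lia.
    - rewrite weval_wpow.
      replace (Z.to_nat (- (Z.of_nat k - Z.of_nat omega))) with (n + k)%nat by lia.
      reflexivity. }
  assert (LE : forall j t, t <= Nat.iter j (fun u => b (a u)) (Nat.iter j bi t)).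
  { induction j; intros t; [simpl; lra|].
    rewrite (Nat.iter_succ_r j _ bi t), Nat.iter_succ.
    rewrite <- (hb1 t) at 1. apply mb.
    eapply Rle_trans; [apply IHj|]. left; apply Hapos. }
  assert (LT : forall j t, t <= Nat.iter j b (Nat.iter j D t)).
  { induction j; intros t; [simpl; lra|].
    rewrite (Nat.iter_succ_r j _ D t), Nat.iter_succ.
    rewrite <- (hb1 t) at 1. apply mb.
    eapply Rle_trans; [|apply IHj]. rewrite HD. apply Hg. }
  assert (LU : forall j t, t <= Nat.iter j D (Nat.iter j b t)).
  { induction j; intros t; [simpl; lra|].
    rewrite (Nat.iter_succ_r j _ b t), Nat.iter_succ.
    eapply Rle_trans; [|apply mD, IHj]. rewrite HD, hb2. apply Hg. }
  assert (HW : forall t, t <= W t).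
  { intros t. rewrite EW, Nat.iter_add.
    eapply Rle_trans; [apply (LE k t)|]. apply mc.
    eapply Rle_trans; [|apply LT].
    pose proof (LU k (Nat.iter k bi t)) as H.
    rewrite (iter_inv k b bi hb1 t) in H. exact H. }
  intros t. apply Rle_ge.
  assert (Hu : x (xi t) = t) by apply Hx.
  set (u := xi t) in *.
  rewrite <- Hu at 2. rewrite <- Hcb.
  assert (E1 : weval a ai b bi (rel_lhs k) u = c (b u)).
  { unfold rel_lhs. rewrite weval_app, weval_wpow. reflexivity. }
  assert (E3 : weval a ai b bi (rel_rhs omega m k) u = Nat.iter m W (x (a u))).
  { unfold rel_rhs. rewrite !weval_app, !weval_wpow. reflexivity. }
  rewrite <- E1, hrel, E3.
  eapply Rle_trans; [|apply iter_ge, HW].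
  rewrite <- Hu. apply mx. left; apply Hapos.
Qed.
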